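(* Let $\kappa\ge 3$ be an integer, $\mathcal{P}_0$ a finite set of primes, and $\omega$ a nonnegative integer-valued function on the primes with $\omega(p)<\kappa$ for $p\in\mathcal{P}_0$, $\omega(p)=\kappa$ for primes $p\notin\mathcal{P}_0$, and $\omega(p)<p$ for all primes $p$. Define $\omega_0(p)=\kappa$ for $p>\kappa$ and $\omega_0(p)=\omega(p)$ for $p\le\kappa$. Then for all $z>0$, \[L(z,\omega)\geq \prod_{\substack{p\in\mathcal{P}_0\\ p>\kappa}}\frac{p-\kappa}{p-\omega(p)}\,L(z,\omega_0).\]
   Context: For a function $h$ on the primes with $0\le h(p)<p$ for all $p$, and $z>0$, define $L(z,h)=\sum_{q\leq z}\mu^2(q)\prod_{p\mid q}\frac{h(p)}{p-h(p)}$, where $q$ runs over positive integers and $\mu$ is the Möbius function. *)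

(* Defs.v *)
From mathcomp Require Import all_boot all_order all_algebra.
Set Implicit Arguments. Unset Strict Implicit. Unset Printing Implicit Defensive.
Import Order.TTheory GRing.Theory Num.Theory.
Local Open Scope ring_scope.

Definition squarefree (q : nat) : bool :=
  [forall d : 'I_q.+1, (1 < d)%N ==> ~~ ((d : nat) ^ 2 %| q)%N].

Definition mu2 (R : pzRingType) (q : nat) : R := if squarefree q then 1 else 0.

Definition L (R : archiRealFieldType) (z : R) (h : nat -> nat) : R :=
  \sum_(1 <= q < (Num.truncn z).+1)
     mu2 R q * \prod_(p <- primes q) ((h p)%:R / ((p%:R : R) - (h p)%:R)).

Definition omega0 (kappa : nat) (omega : nat -> nat) (p : nat) : nat :=
  if (kappa < p)%N then kappa else omega p.

(* Main.v *)
Require Import Defs.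
From mathcomp Require Import all_boot all_order all_algebra.
From mathcomp Require Import zify ring lra.
Import Order.TTheory GRing.Theory Num.Theory.
Local Open Scope ring_scope.

Lemma sum_mult (R : nmodType) (F : nat -> R) p N : (0 < p)%N ->
  \sum_(1 <= q < N.+1 | (p %| q)%N) F q = \sum_(1 <= b < (N %/ p).+1) F (b * p)%N.
Proof.
move=> p0; rewrite big_mkcond /=.
elim: N => [|N IH]; first by rewrite div0n !big_geq.
rewrite big_nat_recr //= IH divnS //.
case pN: (p %| N.+1)%N; last by rewrite addr0.
rewrite add1n [RHS]big_nat_recr //=; congr (_ + F _).
have := divnK pN; rewrite divnS // pN add1n => ->; done.
Qed.

Lemma sqf_div b p : (0 < p)%N -> squarefree (b * p) -> squarefree b.
Proof.
move=> p0 /forallP H; apply/forallP => d; apply/implyP => d1.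
have dlt : (d < (b * p).+1)%N.
  by rewrite ltnS (leq_trans _ (leq_pmulr b p0)) // -ltnS ltn_ord.
have := H (Ordinal dlt); rewrite /= d1 /=; apply: contra => Hd; exact: dvdn_mulr.
Qed.

Lemma not_sqf b p : prime p -> (0 < b)%N -> (p %| b)%N -> ~~ squarefree (b * p).
Proof.
move=> pp b0 pb; apply/forallPn.
have plt : (p < (b * p).+1)%N by rewrite ltnS leq_pmull.
exists (Ordinal plt); rewrite /= prime_gt1 //= negbK.
by rewrite (expnS p 1) expn1 mulnC dvdn_mul.
Qed.

Lemma primes_perm b p : prime p -> (0 < b)%N -> ~~ (p %| b)%N ->
  perm_eq (primes (b * p)) (p :: primes b).
Proof.
move=> pp b0 npb; apply: uniq_perm; first exact: primes_uniq.
  by rewrite /= primes_uniq andbT mem_primes pp b0 /= (negbTE npb).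
move=> r; rewrite primesM // ?prime_gt0 // in_cons orbC primes_prime // mem_seq1.
by [].
Qed.

Section K.
Variable R : archiRealFieldType.

Definition gg (h : nat -> nat) (r : nat) : R := (h r)%:R / ((r%:R : R) - (h r)%:R).

Lemma gg_ge0 h r : (h r <= r)%N -> 0 <= gg h r.
Proof. by move=> H; rewrite /gg divr_ge0 // ?ler0n // subr_ge0 ler_nat. Qed.

Lemma GG_ge0 h q (P : pred nat) : (forall r, prime r -> (h r < r)%N) ->
  0 <= \prod_(r <- primes q | P r) gg h r.
Proof.
move=> H; rewrite big_seq_cond; apply: prodr_ge0 => r.
rewrite mem_primes => /andP[/andP[pr _] _]; apply: gg_ge0; exact: ltnW (H r pr).
Qed.

Lemma mu2_ge0 q : 0 <= mu2 R q.
Proof. by rewrite /mu2; case: ifP. Qed.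

Lemma prod_perm h b p : prime p -> (0 < b)%N -> ~~ (p %| b)%N ->
  \prod_(r <- primes (b * p) | r != p) gg h r = \prod_(r <- primes b) gg h r.
Proof.
move=> pp b0 npb; rewrite (perm_big _ (primes_perm _ _ pp b0 npb)) big_cons eqxx /=.
rewrite big_seq_cond [RHS]big_seq; apply: eq_bigl => r.
case: (boolP (r \in primes b)) => //= rin; apply/eqP => rp; move: rin.
by rewrite rp mem_primes pp b0 (negbTE npb).
Qed.

Lemma L_ext (z : R) h h' : (forall r, prime r -> h r = h' r) -> L z h = L z h'.
Proof.
move=> H; apply: eq_bigr => q _; congr (_ * _); rewrite big_seq [RHS]big_seq.
by apply: eq_bigr => r; rewrite mem_primes => /andP[pr _]; rewrite H.
Qed.

Lemma decomp (z : R) p h h1 : prime p -> (forall r, r != p -> h r = h1 r) ->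
  L z h = \sum_(1 <= q < (Num.truncn z).+1 | ~~ (p %| q)%N)
             mu2 R q * \prod_(r <- primes q) gg h1 r
        + gg h p * \sum_(1 <= q < (Num.truncn z).+1 | (p %| q)%N)
             mu2 R q * \prod_(r <- primes q | r != p) gg h1 r.
Proof.
move=> pp H; rewrite /L (bigID (fun q => (p %| q)%N)) /= addrC; congr (_ + _).
  apply: eq_bigr => q npq; congr (_ * _); rewrite big_seq [RHS]big_seq.
  apply: eq_bigr => r; rewrite mem_primes => /and3P[pr _ rq]; rewrite /gg H //.
  by apply: contraNneq npq => <-.
rewrite mulr_sumr big_nat_cond [RHS]big_nat_cond.
apply: eq_bigr => q /andP[/andP[q1 _] pq].
rewrite (bigD1_seq p) ?primes_uniq // ?mem_primes ?pp ?q1 ?pq //.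
rewrite mulrCA; congr (_ * (_ * _)).
by apply: eq_bigr => r rp; rewrite /gg H.
Qed.

Lemma BleA N p h1 : prime p -> (forall r, prime r -> (h1 r < r)%N) ->
  \sum_(1 <= q < N.+1 | (p %| q)%N) mu2 R q * \prod_(r <- primes q | r != p) gg h1 r
  <= \sum_(1 <= q < N.+1 | ~~ (p %| q)%N) mu2 R q * \prod_(r <- primes q) gg h1 r.
Proof.
move=> pp Hh; have p0 := prime_gt0 pp.
rewrite sum_mult //.
apply: le_trans (_ : _ <= \sum_(1 <= b < (N %/ p).+1)
   (if ~~ (p %| b)%N then mu2 R b * \prod_(r <- primes b) gg h1 r else 0)) _.
  apply: ler_sum_nat => b /andP[b1 _]; case: ifP => pb.
    rewrite prod_perm //; rewrite /mu2; case: ifP => sq.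
      by rewrite (sqf_div _ _ p0 sq).
    by rewrite mul0r; apply: mulr_ge0; [case: ifP | exact: GG_ge0].
  by rewrite /mu2 (negbTE (not_sqf _ _ pp b1 (negbFE pb))) mul0r.
rewrite [X in _ <= X]big_mkcond /=.
rewrite [X in _ <= X](big_cat_nat _ (n := (N %/ p).+1)) //= ?ltnS ?leq_div //.
rewrite lerDl sumr_ge0 // => i _; case: ifP => // _.
apply: mulr_ge0; [exact: mu2_ge0 | exact: GG_ge0].
Qed.

Lemma step (z : R) h1 h2 p : prime p -> (forall r, r != p -> h2 r = h1 r) ->
  (forall r, prime r -> (h1 r < r)%N) -> (h1 p <= h2 p)%N -> (h2 p < p)%N ->
  ((p%:R - (h2 p)%:R) / (p%:R - (h1 p)%:R)) * L z h2 <= L z h1.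
Proof.
move=> pp H21 H1 le12 lt2.
rewrite (decomp z _ _ _ pp H21) (decomp z _ h1 h1 pp (fun r _ => erefl)).
have BA := BleA (Num.truncn z) _ _ pp H1.
set B := \sum_(_ <= _ < _ | _) _ in BA *.
set A := \sum_(_ <= _ < _ | _) _ in BA *.
have B0 : 0 <= B by rewrite sumr_ge0 // => i _; apply: mulr_ge0; [exact: mu2_ge0 | exact: GG_ge0].
rewrite /gg.
have : ((h1 p)%:R : R) <= (h2 p)%:R by rewrite ler_nat.
have : ((h2 p)%:R : R) < p%:R by rewrite ltr_nat.
have : (0 : R) <= (h1 p)%:R by rewrite ler0n.
move: ((h1 p)%:R) ((h2 p)%:R) (p%:R : R) => x y P x0 yP xy.
have Px : P - x != 0 by rewrite subr_eq0 gt_eqF //; lra.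
have Py : P - y != 0 by rewrite subr_eq0 gt_eqF //; lra.
have -> : (P - y) / (P - x) * (A + y / (P - y) * B) = ((P - y) * A + y * B) / (P - x).
  by field; rewrite Px Py.
have -> : A + x / (P - x) * B = ((P - x) * A + x * B) / (P - x).
  by field.
have Pinv : 0 <= (P - x)^-1 by rewrite invr_ge0 subr_ge0; lra.
rewrite ler_wpM2r //.
have HH : 0 <= (y - x) * (A - B) by apply: mulr_ge0; rewrite subr_ge0.
nra.
Qed.

End K.

Definition hs (kappa : nat) (omega : nat -> nat) (s : seq nat) (r : nat) : nat :=
  if (r \in s) && (kappa < r)%N then kappa else omega r.

Lemma iter (R : archiRealFieldType) (z : R) kappa omega s :
  all prime s -> uniq s -> (forall p, p \in s -> (omega p <= kappa)%N) ->
  (forall r, prime r -> (omega r < r)%N) ->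
  (\prod_(p <- s | (kappa < p)%N)
        (((p%:R : R) - kappa%:R) / (p%:R - (omega p)%:R))) * L z (hs kappa omega s)
  <= L z omega.
Proof.
move=> + + + Hlt; elim: s => [|p s IH].
  by move=> _ _ _; rewrite big_nil mul1r (L_ext _ _ _ omega).
move=> /andP[pp aps] /andP[nps us] Hk.
have IH' := IH aps us (fun q qs => Hk q (mem_behead (s := p :: s) qs)).
have C0 : 0 <= \prod_(q <- s | (kappa < q)%N)
        (((q%:R : R) - kappa%:R) / (q%:R - (omega q)%:R)).
  rewrite big_seq_cond; apply: prodr_ge0 => q /andP[qs kq].
  have qpr : prime q by move/allP: aps => /(_ q qs).
  have := Hlt q qpr; rewrite -(ltr_nat R) => h1; rewrite -(ltr_nat R) in kq.
  by apply: divr_ge0; rewrite subr_ge0 ltW.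
rewrite big_cons; case: ifP => kp.
  apply: le_trans IH'; rewrite -mulrA mulrCA ler_wpM2l //.
  have E1 : hs kappa omega (p :: s) p = kappa by rewrite /hs mem_head kp.
  have E2 : hs kappa omega s p = omega p by rewrite /hs (negbTE nps).
  have -> : ((p%:R - kappa%:R) / (p%:R - (omega p)%:R) :> R) =
    (p%:R - (hs kappa omega (p :: s) p)%:R) / (p%:R - (hs kappa omega s p)%:R).
    by rewrite /hs mem_head kp (negbTE nps).
  apply: step => //.
  - by move=> r rp; rewrite /hs in_cons (negbTE rp).
  - move=> r pr; rewrite /hs; case: ifP => [/andP[_ //]|_]; exact: Hlt.
  - by rewrite E1 E2 Hk ?mem_head.
  - by rewrite E1.
rewrite (L_ext _ _ _ (hs kappa omega s)) //.
move=> r _; rewrite /hs in_cons; case: (eqVneq r p) => [->|] /=; last by [].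
by rewrite kp (negbTE nps) andbF.
Qed.

Theorem corollary1 (R : archiRealFieldType) (kappa : nat) (P0 : seq nat)
    (omega : nat -> nat)
    (hkappa : (3 <= kappa)%N)
    (hP0prime : all prime P0) (hP0uniq : uniq P0)
    (hin : forall p, prime p -> p \in P0 -> (omega p < kappa)%N)
    (hout : forall p, prime p -> p \notin P0 -> omega p = kappa)
    (hlt : forall p, prime p -> (omega p < p)%N)
    (z : R) (hz : 0 < z) :
  L z omega >=
    (\prod_(p <- P0 | (kappa < p)%N)
        (((p%:R : R) - kappa%:R) / (p%:R - (omega p)%:R)))
    * L z (omega0 kappa omega).
Proof.
rewrite -(L_ext _ _ (hs kappa omega P0)).
  apply: iter => // p pP; apply: ltnW; apply: hin => //.
  by move/allP: hP0prime => /(_ p pP).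
move=> r pr; rewrite /hs /omega0; case: (boolP (r \in P0)) => /= rP.
  by case: ifP.
by rewrite hout //; case: ifP.
Qed.
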